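(* Let $0<\omega_1<\omega_2<\cdots$, $(c_j)$ a real square-summable sequence with all $c_j\ne0$, $\gamma>0$, and let $A$ be the operator on $H=\ell^2\times\ell^2$ (complex) given by $A(q,p)=(-i\Omega q+\check Aq+\check Ap,\ \check Aq+i\Omega p+\check Ap)$ with $\Omega=\mathrm{diag}(\omega_j)$, $(\check Ax)_j=-\frac\gamma2c_j\sum_\iota c_\iota x_\iota$. Assume the standing enumeration (S) of the eigenvalues $\{\lambda_n,\bar\lambda_n\}$ of $A$ given in the context, and let $G$ be the diagonal operator $G(q,p)=(G_1q,G_2p)$, $G_1=\mathrm{diag}(\bar\lambda_1,\bar\lambda_2,\dots)$, $G_2=\mathrm{diag}(\lambda_1,\lambda_2,\dots)$ on its natural domain. Assume (A2): there is $\kappa>0$ with $\omega_{j+1}-\omega_j\ge\kappa$ for all $j$; and (A3): there are $\alpha>0$, $\beta>0$, $k_0\in\mathbb N$ with $|c_k|\omega_k^{\alpha/2}\ge\beta$ for all $k\ge k_0$. Then $$\|R(is;G)\|=\|(G-isI)^{-1}\|=O(|s|^\alpha)\quad\text{as } |s|\to\infty,\ s\in\mathbb R.$$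
   Context: Standing enumeration (S): $f(\lambda)=\sum_j\frac{c_j^2}{\omega_j}\big(\frac1{\lambda-i\omega_j}-\frac1{\lambda+i\omega_j}\big)+\frac{2i}{\gamma\lambda}$; the eigenvalues of $A$ are pairwise distinct simple zeros of $f$ forming the set $\{\lambda_n,\bar\lambda_n:n\in\mathbb N\}$, with $\lambda_n$ in a neighbourhood of $i\omega_n$ and $\bar\lambda_n$ near $-i\omega_n$, none purely imaginary; and for every $k$ (with $\omega_k>1$, $\omega_{k+1}-\omega_k>\omega_k-\omega_{k-1}$ for $k\ge2$), with $F_k(\lambda)=(\lambda-i\omega_k)f(\lambda)$, $\lambda_k^*=i\omega_k-F_k(i\omega_k)/F_k'(i\omega_k)$, $\rho_k$ defined by $F_k(\lambda)=F_k(i\omega_k)+(\lambda-i\omega_k)F_k'(i\omega_k)+(\lambda-i\omega_k)^2\rho_k(\lambda)$, there are $0<R_1^{(k)}<\omega_k-\omega_{k-1}$ and $R_k>0$ such that $M_k=\sup_{|\lambda-i\omega_k|\le R_1^{(k)}}|\rho_k|$ satisfies $0<M_k<\frac{\gamma\omega_k|F_k'(i\omega_k)|^3}{c_k^2(\gamma\omega_k|F_k'(i\omega_k)|+1)^2}$, $\sqrt{R_k}\in(b_k-\sqrt{b_k^2-d_k},b_k+\sqrt{b_k^2-d_k})$ ($b_k=\sqrt{|F_k'(i\omega_k)|/(4M_k)}$, $d_k=|F_k(i\omega_k)/F_k'(i\omega_k)|$), $R_k\le\frac12|\mathrm{Re}\lambda_k^*|$, $\{|\lambda-\lambda_k^*|<R_k\}\subset\{|\lambda-i\omega_k|\le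 R_1^{(k)}\}$, and $\lambda_k$ is the zero of $f$ in $\{|\lambda-\lambda_k^*|<R_k\}$. *)

(* Defs.v *)
From Stdlib Require Import Reals.
From Coquelicot Require Import Coquelicot.
Open Scope R_scope.

(* Indexing: all sequences are 0-indexed; index j here is index j+1 of the paper. *)

(* complex series: sum of real parts + i * sum of imaginary parts (Coquelicot's
   Series is the sum when the series converges). *)
Definition CSeries (a : nat -> C) : C :=
  (Series (fun n => Re (a n)), Series (fun n => Im (a n))).

Definition l2 (x : nat -> C) : Prop := ex_series (fun n => Cmod (x n) ^ 2).

Definition Hsp : Type := ((nat -> C) * (nat -> C))%type.
Definition inH (x : Hsp) : Prop := l2 (fst x) /\ l2 (snd x).
Definition hnorm (x : Hsp) : R :=
  sqrt (Series (fun n => Cmod (fst x n) ^ 2) + Series (fun n => Cmod (snd x n) ^ 2)).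
Definition hsub (x y : Hsp) : Hsp :=
  (fun n => (fst x n - fst y n)%C, fun n => (snd x n - snd y n)%C).
Definition hscal (z : C) (x : Hsp) : Hsp :=
  (fun n => (z * fst x n)%C, fun n => (z * snd x n)%C).

Definition Acheck (c : nat -> R) (gamma : R) (x : nat -> C) (j : nat) : C :=
  (RtoC (- (gamma / 2) * c j) * CSeries (fun i => RtoC (c i) * x i))%C.

Definition Aop (om c : nat -> R) (gamma : R) (x : Hsp) : Hsp :=
  (fun j => (- Ci * RtoC (om j) * fst x j + Acheck c gamma (fst x) j
             + Acheck c gamma (snd x) j)%C,
   fun j => (Acheck c gamma (fst x) j + Ci * RtoC (om j) * snd x j
             + Acheck c gamma (snd x) j)%C).

Definition DA (om : nat -> R) (x : Hsp) : Prop :=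
  inH x /\ l2 (fun j => (RtoC (om j) * fst x j)%C)
        /\ l2 (fun j => (RtoC (om j) * snd x j)%C).

Definition hnonzero (x : Hsp) : Prop := exists j, fst x j <> 0%C \/ snd x j <> 0%C.

Definition eigenvalue_A (om c : nat -> R) (gamma : R) (mu : C) : Prop :=
  exists x, DA om x /\ hnonzero x /\ Aop om c gamma x = hscal mu x.

Definition fterm (om c : nat -> R) (j : nat) (l : C) : C :=
  (RtoC (c j ^ 2 / om j) * (/ (l - Ci * RtoC (om j)) - / (l + Ci * RtoC (om j))))%C.

Definition f_fun (om c : nat -> R) (gamma : R) (l : C) : C :=
  (CSeries (fun j => fterm om c j l) + 2 * Ci / (RtoC gamma * l))%C.

(* F_k(l) = (l - i om_k) f(l), extended continuously at l = i om_k: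
   for l <> i om_k this is literally (l - i om_k) f(l). *)
Definition Fk (om c : nat -> R) (gamma : R) (k : nat) (l : C) : C :=
  ((l - Ci * RtoC (om k)) * (f_fun om c gamma l - fterm om c k l)
   + RtoC (c k ^ 2 / om k) * (1 - (l - Ci * RtoC (om k)) / (l + Ci * RtoC (om k))))%C.

Definition om_prev (om : nat -> R) (k : nat) : R :=
  match k with O => 0 | S k' => om k' end.

Definition is_Cderive (g : C -> C) (z d : C) : Prop :=
  is_derive (K := C_AbsRing) (V := C_NormedModule) g z d.

Definition standing_S (om c : nat -> R) (gamma : R) (lam : nat -> C) : Prop :=
  (forall mu, eigenvalue_A om c gamma mu <-> exists n, mu = lam n \/ mu = Cconj (lam n))
  /\ (forall n m, lam n = lam m -> n = m)
  /\ (forall n m, lam n <> Cconj (lam m))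
  /\ (forall n, f_fun om c gamma (lam n) = 0%C /\ f_fun om c gamma (Cconj (lam n)) = 0%C)
  /\ (forall n, (exists d, d <> 0%C /\ is_Cderive (f_fun om c gamma) (lam n) d)
             /\ (exists d, d <> 0%C /\ is_Cderive (f_fun om c gamma) (Cconj (lam n)) d))
  /\ (forall n, Re (lam n) <> 0)
  /\ (forall k, 1 < om k ->
        ((0 < k)%nat -> om (S k) - om k > om k - om_prev om k) ->
        forall F1 : C, is_Cderive (Fk om c gamma k) (Ci * RtoC (om k))%C F1 ->
        let iwk := (Ci * RtoC (om k))%C in
        let F0 := Fk om c gamma k iwk in
        let lstar := (iwk - F0 / F1)%C in
        let rho := fun l => ((Fk om c gamma k l - F0 - (l - iwk) * F1)
                              / ((l - iwk) * (l - iwk)))%C in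
        exists R1 Rk Mk : R,
          0 < R1 < om k - om_prev om k /\ 0 < Rk /\
          Lub_Rbar (fun r => exists l, 0 < Cmod (l - iwk) <= R1 /\ r = Cmod (rho l))
            = Finite Mk /\
          0 < Mk < gamma * om k * Cmod F1 ^ 3
                   / (c k ^ 2 * (gamma * om k * Cmod F1 + 1) ^ 2) /\
          (let bk := sqrt (Cmod F1 / (4 * Mk)) in
           let dk := Cmod (F0 / F1) in
           bk - sqrt (bk ^ 2 - dk) < sqrt Rk < bk + sqrt (bk ^ 2 - dk)) /\
          Rk <= / 2 * Rabs (Re lstar) /\
          (forall l, Cmod (l - lstar) < Rk -> Cmod (l - iwk) <= R1) /\
          Cmod (lam k - lstar) < Rk /\
          (forall l, Cmod (l - lstar) < Rk -> f_fun om c gamma l = 0%C -> l = lam k)).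

Definition Gop (lam : nat -> C) (x : Hsp) : Hsp :=
  (fun n => (Cconj (lam n) * fst x n)%C, fun n => (lam n * snd x n)%C).
Definition DG (lam : nat -> C) (x : Hsp) : Prop :=
  inH x /\ l2 (fun n => (Cconj (lam n) * fst x n)%C) /\ l2 (fun n => (lam n * snd x n)%C).

(* "z is in the resolvent set of G and ||R(z;G)|| = ||(G - z I)^{-1}|| <= K":
   G - zI : D(G) -> H is onto H and ||y|| <= K ||(G - zI) y|| for all y in D(G)
   (hence injective, with inverse of operator norm <= K). *)
Definition resolvent_norm_le (lam : nat -> C) (z : C) (K : R) : Prop :=
  (forall x, inH x -> exists y, DG lam y /\ hsub (Gop lam y) (hscal z y) = x)
  /\ (forall y, DG lam y -> hnorm y <= K * hnorm (hsub (Gop lam y) (hscal z y))).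

(* Main.v *)
Require Import Defs.
From Stdlib Require Import Reals.
From Coquelicot Require Import Coquelicot.
From Stdlib Require Import Lra Lia Psatz Classical FunctionalExtensionality.
Open Scope R_scope.

Definition PP (a b w : R) := a ^ 2 + (b - w) ^ 2.
Definition QQ (a b w : R) := a ^ 2 + (b + w) ^ 2.

Lemma sub_iw a b w : ((a, b) - Ci * RtoC w)%C = (a, b - w).
Proof. unfold Cminus, Cplus, Copp, Cmult, Ci, RtoC; apply injective_projections; simpl; ring. Qed.
Lemma add_iw a b w : ((a, b) + Ci * RtoC w)%C = (a, b + w).
Proof. unfold Cminus, Cplus, Copp, Cmult, Ci, RtoC; apply injective_projections; simpl; ring. Qed.

Lemma fterm_eq om c j a b :
  fterm om c j (a, b) =
  (c j ^ 2 / om j * (a / PP a b (om j) - a / QQ a b (om j)),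
   c j ^ 2 / om j * (- (b - om j) / PP a b (om j) + (b + om j) / QQ a b (om j))).
Proof.
  unfold fterm. rewrite sub_iw, add_iw.
  unfold Cinv, PP, QQ. cbn [fst snd].
  generalize (a ^ 2 + (b - om j) ^ 2) (a ^ 2 + (b + om j) ^ 2) (c j ^ 2 / om j).
  intros P Q r.
  unfold Cminus, Cplus, Copp, Cmult, RtoC; apply injective_projections; cbn [fst snd]; unfold Rdiv; ring.
Qed.
Lemma twoi_eq g a b : g <> 0 -> a ^ 2 + b ^ 2 <> 0 -> (2 * Ci / (RtoC g * (a,b)))%C = (2*b/(g*(a^2+b^2)), 2*a/(g*(a^2+b^2))).
Proof. intros Hg Hn. unfold Cdiv, Cinv, Cmult, Ci, RtoC; apply injective_projections; cbn [fst snd]. 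
 all: field; repeat split; auto.
 all: replace ((g * a) ^ 2 + (g * b) ^ 2) with (g^2 * (a^2+b^2)) by ring; apply Rmult_integral_contrapositive_currified; auto; apply pow_nonzero; auto.
Qed.
Lemma ex_series_bound (u v: nat -> R): (forall n, Rabs (u n) <= v n) -> ex_series v -> ex_series u.
Proof. intros; apply (ex_series_le u v); auto. Qed.
Lemma ex_series_lin k1 k2 (u v : nat -> R): ex_series u -> ex_series v -> ex_series (fun n => k1*u n + k2*v n).
Proof. intros. apply (ex_series_plus (fun n => k1 * u n) (fun n => k2 * v n)). exact (ex_series_scal_l k1 u H). exact (ex_series_scal_l k2 v H0). Qed.
Lemma Series_lin k1 k2 (u v : nat -> R): ex_series u -> ex_series v -> Series (fun n => k1*u n + k2*v n) = k1 * Series u + k2 * Series v.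
Proof. intros. rewrite Series_plus. rewrite !Series_scal_l. auto. exact (ex_series_scal_l k1 u H). exact (ex_series_scal_l k2 v H0). Qed.

Lemma div_le_inv t D u : 0 < D -> 0 < u -> t * u <= D -> t / D <= / u.
Proof.
  intros HD Hu H. assert (t / D - / u = (t * u - D) / (D * u)) by (field; lra).
  assert ((t * u - D) / (D * u) <= 0).
  { unfold Rdiv. apply Rmult_le_0_r; [lra|]. left; apply Rinv_0_lt_compat; nra. }
  lra.
Qed.

Lemma frac_bound a x : a <> 0 -> Rabs x / (a ^ 2 + x ^ 2) <= / Rabs a.
Proof.
  intros Ha. apply div_le_inv.
  - assert (0 < a^2) by (apply pow2_gt_0; auto). assert (0 <= x^2) by apply pow2_ge_0. lra.
  - apply Rabs_pos_lt; auto.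
  - rewrite <- (pow2_abs a), <- (pow2_abs x).
    assert (0 <= (Rabs x - Rabs a)^2) by apply pow2_ge_0. nra.
Qed.

Lemma frac_bound2 a x : x <> 0 -> Rabs x / (a ^ 2 + x ^ 2) <= / Rabs x.
Proof.
  intros Hx. apply div_le_inv.
  - assert (0 < x^2) by (apply pow2_gt_0; auto). assert (0 <= a^2) by apply pow2_ge_0. lra.
  - apply Rabs_pos_lt; auto.
  - rewrite <- (pow2_abs x). assert (0 <= a^2) by apply pow2_ge_0. nra.
Qed.

Definition rr (om c : nat -> R) a b j := c j ^ 2 * (/ PP a b (om j) + / QQ a b (om j)).
Definition ii (om c : nat -> R) a b j := c j ^ 2 * ((b - om j) / PP a b (om j) + (b + om j) / QQ a b (om j)).

Lemma PP_pos a b w : a <> 0 -> 0 < PP a b w.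
Proof. intros. unfold PP. assert (0 < a^2) by (apply pow2_gt_0; auto). assert (0 <= (b-w)^2) by apply pow2_ge_0. lra. Qed.
Lemma QQ_pos a b w : a <> 0 -> 0 < QQ a b w.
Proof. intros. unfold QQ. assert (0 < a^2) by (apply pow2_gt_0; auto). assert (0 <= (b+w)^2) by apply pow2_ge_0. lra. Qed.

Lemma f_zero_RI om c gamma a b :
  (forall j, 0 < om j) -> ex_series (fun j => c j ^ 2) -> 0 < gamma ->
  a <> 0 -> b <> 0 -> f_fun om c gamma (a, b) = 0%C ->
  ex_series (rr om c a b) /\ ex_series (ii om c a b) /\
  Series (rr om c a b) = - 2 / (gamma * a) /\ Series (ii om c a b) = 0.
Proof.
  intros Hom Hc Hg Ha Hb Hf.
  assert (HN : a ^ 2 + b ^ 2 <> 0).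
  { assert (0 < a^2) by (apply pow2_gt_0; auto). assert (0 <= b^2) by apply pow2_ge_0. lra. }
  assert (Ha2 : 0 < a ^ 2) by (apply pow2_gt_0; auto).
  assert (Hr : ex_series (rr om c a b)).
  { apply (ex_series_bound _ (fun j => (2 / a ^ 2) * c j ^ 2)).
    - intros j. unfold rr. pose proof (PP_pos a b (om j) Ha). pose proof (QQ_pos a b (om j) Ha).
      assert (/ PP a b (om j) <= / a^2).
      { apply Rinv_le_contravar; auto. unfold PP. assert (0 <= (b - om j)^2) by apply pow2_ge_0. lra. }
      assert (/ QQ a b (om j) <= / a^2).
      { apply Rinv_le_contravar; auto. unfold QQ. assert (0 <= (b + om j)^2) by apply pow2_ge_0. lra. }
      assert (0 < / PP a b (om j)) by (apply Rinv_0_lt_compat; auto).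
      assert (0 < / QQ a b (om j)) by (apply Rinv_0_lt_compat; auto).
      assert (0 <= c j ^ 2) by apply pow2_ge_0.
      rewrite Rabs_pos_eq by nra. unfold Rdiv. nra.
    - exact (ex_series_scal_l (2 / a ^ 2) _ Hc). }
  assert (Hi : ex_series (ii om c a b)).
  { apply (ex_series_bound _ (fun j => (2 / Rabs a) * c j ^ 2)).
    - intros j. unfold ii. 
      pose proof (frac_bound a (b - om j) Ha). pose proof (frac_bound a (b + om j) Ha).
      assert (0 <= c j ^ 2) by apply pow2_ge_0.
      rewrite Rabs_mult, Rabs_pos_eq with (x := c j ^ 2) by auto.
      assert (Rabs ((b - om j) / PP a b (om j) + (b + om j) / QQ a b (om j)) <= 2 / Rabs a).
      { eapply Rle_trans; [apply Rabs_triang|]. unfold Rdiv. rewrite !Rabs_mult.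
        rewrite !Rabs_inv. rewrite (Rabs_pos_eq (PP _ _ _)) by (left; apply PP_pos; auto).
        rewrite (Rabs_pos_eq (QQ _ _ _)) by (left; apply QQ_pos; auto).
        unfold PP, QQ. unfold Rdiv in *. lra. }
      nra.
    - exact (ex_series_scal_l (2 / Rabs a) _ Hc). }
  assert (HN' : 0 < a ^ 2 + b ^ 2) by (assert (0 <= b^2) by apply pow2_ge_0; lra).
  set (N := a ^ 2 + b ^ 2) in *.
  assert (HRe : forall j, fst (fterm om c j (a, b)) = (a * b / N) * rr om c a b j + (a / N) * ii om c a b j).
  { intros j. rewrite fterm_eq. cbn [fst]. unfold rr, ii, N.
    pose proof (PP_pos a b (om j) Ha). pose proof (QQ_pos a b (om j) Ha). pose proof (Hom j).
    unfold PP, QQ in *. field; repeat split; apply Rgt_not_eq; try lra; unfold N in HN'; lra. }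
  assert (HIm : forall j, snd (fterm om c j (a, b)) = (a * a / N) * rr om c a b j + (- b / N) * ii om c a b j).
  { intros j. rewrite fterm_eq. cbn [snd]. unfold rr, ii, N.
    pose proof (PP_pos a b (om j) Ha). pose proof (QQ_pos a b (om j) Ha). pose proof (Hom j).
    unfold PP, QQ in *. field; repeat split; apply Rgt_not_eq; try lra; unfold N in HN'; lra. }
  assert (HX : Series (fun j => fst (fterm om c j (a, b))) = (a * b / N) * Series (rr om c a b) + (a / N) * Series (ii om c a b)).
  { rewrite (Series_ext _ _ HRe). apply Series_lin; auto. }
  assert (HY : Series (fun j => snd (fterm om c j (a, b))) = (a * a / N) * Series (rr om c a b) + (- b / N) * Series (ii om c a b)).
  { rewrite (Series_ext _ _ HIm). apply Series_lin; auto. }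
  unfold f_fun, CSeries in Hf. rewrite twoi_eq in Hf; [|apply Rgt_not_eq; lra|exact HN].
  unfold Re, Im in Hf. rewrite HX, HY in Hf.
  fold N in Hf.
  assert (E1 := f_equal fst Hf). assert (E2 := f_equal snd Hf).
  cbn [fst snd Cplus] in E1, E2.
  set (X := Series (rr om c a b)) in *. set (Y := Series (ii om c a b)) in *.
  assert (E1' : a * b * X + a * Y + 2 * b / gamma = 0).
  { apply (Rmult_eq_reg_r (/ N)); [|apply Rinv_neq_0_compat; lra].
  rewrite Rmult_0_l. simpl in E1. rewrite <- E1. field. lra. }
  assert (E2' : a * a * X - b * Y + 2 * a / gamma = 0).
  { apply (Rmult_eq_reg_r (/ N)); [|apply Rinv_neq_0_compat; lra].
    rewrite Rmult_0_l. simpl in E2. rewrite <- E2. field. lra. }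
  assert (HYv : Y = 0).
  {
    assert (N * Y = 0) by (unfold N; apply (Rmult_eq_reg_l gamma); [|lra];
       replace (gamma * ((a^2+b^2) * Y)) with (gamma * (a * (a * b * X + a * Y + 2 * b / gamma) - b * (a * a * X - b * Y + 2 * a / gamma))) by (field; lra);
       rewrite E1', E2'; ring).
    apply Rmult_integral in H. destruct H; lra. }
  repeat split; auto.
  rewrite HYv in E2'. apply (Rmult_eq_reg_l (a * a)); [|nra].
  replace (a * a * X) with (- (2 * a / gamma)) by lra. field. lra.
Qed.

Lemma sum_delta (v : R) k n :
  sum_f_R0 (fun j => if Nat.eqb j k then v else 0) n = if Nat.leb k n then v else 0.
Proof.
  set (d := fun j => if Nat.eqb j k then v else 0).
  induction n.
  - simpl. unfold d. destruct k; simpl; auto.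
  - change (sum_f_R0 d (S n)) with (sum_f_R0 d n + d (S n)). rewrite IHn. unfold d.
    destruct (Nat.eqb_spec (S n) k), (Nat.leb_spec k n), (Nat.leb_spec k (S n)); try lia; lra.
Qed.

Lemma is_series_delta (v : R) k : is_series (fun j => if Nat.eqb j k then v else 0) v.
Proof.
  apply is_series_Reals. intros eps He. exists k. intros n Hn.
  rewrite sum_delta. destruct (Nat.leb_spec k n); try lia. unfold R_dist.
  rewrite Rminus_eq_0, Rabs_R0. lra.
Qed.

Lemma Series_drop (u : nat -> R) k : ex_series u ->
  Series u = Series (fun j => if Nat.eqb j k then 0 else u j) + u k.
Proof.
  intros Hu.
  set (d := fun j => if Nat.eqb j k then u k else 0).
  assert (Hd : is_series d (u k)) by apply is_series_delta.
  assert (Hd' : ex_series d) by (exists (u k); auto).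
  assert (Hu' : ex_series (fun j => u j - d j)).
  { exact (ex_series_minus u d Hu Hd'). }
  assert (E : forall j, (if Nat.eqb j k then 0 else u j) = u j - d j).
  { intros j. unfold d. destruct (Nat.eqb_spec j k); subst; lra. }
  rewrite (Series_ext _ _ E). rewrite Series_minus by auto.
  rewrite (is_series_unique d (u k) Hd). ring.
Qed.

Lemma Series_nonneg' (u : nat -> R) : ex_series u -> (forall n, 0 <= u n) -> 0 <= Series u.
Proof.
  intros Hu Hp. assert (Series (fun _ => 0) <= Series u).
  { apply Series_le; auto. intros; split; [lra|auto]. }
  assert (Series (fun _ : nat => 0) = 0).
  { apply is_series_unique. apply is_series_Reals. intros eps He. exists 0%nat. intros n _.
    unfold R_dist. rewrite sum_cte. rewrite Rmult_0_l, Rminus_0_r, Rabs_R0; lra. }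
  lra.
Qed.

Lemma my_div_le x y z : 0 < y -> x <= z * y -> x / y <= z.
Proof.
  intros Hy H. apply (Rmult_le_reg_r y); auto. unfold Rdiv.
  rewrite Rmult_assoc, Rinv_l by (apply Rgt_not_eq; lra). lra.
Qed.

Lemma final_alg A D c g M C2 T :
  0 < A -> 0 <= D -> 0 < c -> c <= T -> 0 < g -> 0 < M -> 0 < C2 ->
  c * g * A <= 2 * (A^2 + D^2) ->
  2 * (A^2 + D^2) <= g * A * (M * (A^2 + D^2) + c) ->
  c * D <= C2 * (A^2 + D^2) ->
  Rmin (g / 4) (2 / (g * (M * T + 4 * C2 ^ 2))) * c <= A.
Proof.
  intros HA HD Hc HcT Hg HM HC h1 h2 h3.
  destruct (Rlt_or_le D A) as [HDA|HAD].
  - eapply Rle_trans; [apply Rmult_le_compat_r; [lra|apply Rmin_l]|].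
    assert (c * g * A < 4 * A^2) by nra.
    assert (c * g < 4 * A) by nra. lra.
  - eapply Rle_trans; [apply Rmult_le_compat_r; [lra|apply Rmin_r]|].
    assert (HD0 : 0 < D) by lra.
    assert (A^2 <= D^2) by nra.
    assert (c * D <= C2 * (2 * D^2)) by nra.
    assert (c <= 2 * C2 * D) by nra.
    assert (c^2 <= 4 * C2^2 * (A^2 + D^2)) by nra.
    set (P := A^2 + D^2) in *.
    assert (HP : 0 < P) by (unfold P; nra).
    (* 2 P c <= g A (M P c + c^2) <= g A (M P c + 4 C2^2 P) *)
    assert (2 * P * c <= g * A * (M * P * c + 4 * C2^2 * P)).
    { assert (2 * P * c <= g * A * (M * P + c) * c) by (apply Rmult_le_compat_r; lra).
      assert (0 <= g * A) by nra. assert (g * A * (c * c) <= g * A * (4 * C2^2 * P)) by (apply Rmult_le_compat_l; nra). nra. }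
    assert (2 * c <= g * A * (M * c + 4 * C2^2)).
    { apply (Rmult_le_reg_l P); auto. nra. }
    assert (2 * c <= g * A * (M * T + 4 * C2^2)) by nra.
    assert (0 < g * (M * T + 4 * C2 ^ 2)) by nra.
    replace (2 / (g * (M * T + 4 * C2 ^ 2)) * c) with ((2 * c) / (g * (M * T + 4 * C2 ^ 2))) by (field; repeat split; apply Rgt_not_eq; nra).
    apply my_div_le; auto. lra.
Qed.

Lemma mul_div_le x y z : 0 < y -> x / y <= z -> x <= z * y.
Proof. intros Hy H. apply (Rmult_le_compat_r y) in H; [|lra]. unfold Rdiv in H.
  rewrite Rmult_assoc, Rinv_l, Rmult_1_r in H by (apply Rgt_not_eq; lra). lra. Qed.

Lemma core_est om c gamma kappa a b :
  (forall j, 0 < om j) -> (forall j, om 0%nat <= om j) ->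
  (forall j k, j <> k -> kappa <= Rabs (om j - om k)) ->
  ex_series (fun j => c j ^ 2) -> c 0%nat <> 0 -> 0 < gamma -> 0 < kappa ->
  a <> 0 -> 0 < b -> f_fun om c gamma (a, b) = 0%C ->
  let T := Series (fun j => c j ^ 2) in
  let M := T * (4 / kappa ^ 2 + 2 / om 0%nat ^ 2) in
  let C2 := T * (2 / kappa + 2 / om 0%nat) in
  ((forall j, kappa / 2 <= Rabs (b - om j)) -> 2 / (gamma * M) <= Rabs a) /\
  (forall k, Rabs (b - om k) < kappa / 2 -> c k <> 0 ->
     Rmin (gamma / 4) (2 / (gamma * (M * T + 4 * C2 ^ 2))) * c k ^ 2 <= Rabs a).
Proof.
  intros Hom Hom0 Hsep Hc Hc0 Hg Hk Ha Hb Hf T M C2.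
  destruct (f_zero_RI om c gamma a b Hom Hc Hg Ha (Rgt_not_eq _ _ Hb) Hf) as [Hr [Hi [SR SI]]].
  set (w0 := om 0%nat) in *.
  assert (Hw0 : 0 < w0) by apply Hom.
  assert (Hcj : forall j, 0 <= c j ^ 2) by (intros; apply pow2_ge_0).
  assert (HTk : forall k, c k ^ 2 <= T).
  { intros k. unfold T. rewrite (Series_drop _ k Hc).
    assert (0 <= Series (fun j => if Nat.eqb j k then 0 else c j ^ 2)).
    { apply Series_nonneg'.
      - apply (ex_series_bound _ (fun j => c j ^ 2)); auto.
        intros j. destruct (Nat.eqb j k); rewrite ?Rabs_R0, ?Rabs_pos_eq; auto; lra.
      - intros j. destruct (Nat.eqb j k); auto; lra. }
    lra. }
  assert (HT : 0 < T).
  { assert (0 < c 0%nat ^ 2) by (apply pow2_gt_0; auto). specialize (HTk 0%nat). lra. }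
  assert (Hrr0 : forall j, 0 <= rr om c a b j).
  { intros j. unfold rr. pose proof (PP_pos a b (om j) Ha). pose proof (QQ_pos a b (om j) Ha).
    assert (0 < / PP a b (om j)) by (apply Rinv_0_lt_compat; auto).
    assert (0 < / QQ a b (om j)) by (apply Rinv_0_lt_compat; auto). specialize (Hcj j). nra. }
  assert (Han : a < 0).
  { destruct (Rlt_or_le a 0) as [H|H]; auto.
    assert (0 < a) by lra. pose proof (Series_nonneg' _ Hr Hrr0).
    rewrite SR in H1. assert (0 < 2 / (gamma * a)) by (apply Rdiv_lt_0_compat; nra).
    unfold Rdiv in *. lra. }
  set (A := - a).
  assert (HA : 0 < A) by (unfold A; lra).
  assert (HabsA : Rabs a = A) by (unfold A; apply Rabs_left; auto).
  rewrite HabsA.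
  assert (SR' : Series (rr om c a b) = 2 / (gamma * A)) by (rewrite SR; unfold A; field; repeat split; intro; nra).
  assert (HQ : forall j, / QQ a b (om j) <= / w0 ^ 2).
  { intros j. apply Rinv_le_contravar. apply pow2_gt_0; lra. unfold QQ.
    assert (w0 <= b + om j) by (specialize (Hom0 j); lra).
    assert (0 <= a ^ 2) by apply pow2_ge_0. nra. }
  assert (HQ2 : forall j, (b + om j) / QQ a b (om j) <= / w0).
  { intros j. assert (Hx : 0 < b + om j) by (specialize (Hom j); lra).
    pose proof (frac_bound2 a (b + om j) (Rgt_not_eq _ _ Hx)).
    rewrite Rabs_pos_eq in H by lra. unfold QQ. eapply Rle_trans; [apply H|].
    apply Rinv_le_contravar; auto. specialize (Hom0 j); lra. }
  assert (HQ3 : forall j, 0 <= (b + om j) / QQ a b (om j)).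
  { intros j. pose proof (QQ_pos a b (om j) Ha). specialize (Hom j).
    unfold Rdiv. apply Rmult_le_pos; [lra|]. left; apply Rinv_0_lt_compat; auto. }
  assert (HP : forall j, kappa / 2 <= Rabs (b - om j) -> / PP a b (om j) <= 4 / kappa ^ 2).
  { intros j Hj. replace (4 / kappa ^ 2) with (/ ((kappa / 2) ^ 2)) by (field; apply Rgt_not_eq; lra).
    apply Rinv_le_contravar. apply pow2_gt_0; lra. unfold PP. rewrite <- (pow2_abs (b - om j)).
    assert (0 <= a ^ 2) by apply pow2_ge_0.
    assert ((kappa/2)^2 <= Rabs (b - om j) ^ 2) by (apply pow_incr; lra). lra. }
  assert (HP2 : forall j, kappa / 2 <= Rabs (b - om j) -> Rabs (b - om j) / PP a b (om j) <= 2 / kappa).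
  { intros j Hj. assert (Hx : b - om j <> 0).
    { intro E. rewrite E, Rabs_R0 in Hj. lra. }
    pose proof (frac_bound2 a (b - om j) Hx). unfold PP. eapply Rle_trans; [apply H|].
    replace (2 / kappa) with (/ (kappa / 2)) by (field; apply Rgt_not_eq; lra).
    apply Rinv_le_contravar; lra. }
  split.
  -
    intros Hfar.
    assert (Series (rr om c a b) <= Series (fun j => (4 / kappa ^ 2 + 2 / w0 ^ 2) * c j ^ 2)).
    { apply Series_le.
      - intros j. split; auto. unfold rr. specialize (HP j (Hfar j)). specialize (HQ j).
        assert (/ w0 ^ 2 <= 2 / w0 ^ 2).
        { assert (0 < / w0 ^ 2) by (apply Rinv_0_lt_compat; apply pow2_gt_0; lra). unfold Rdiv. lra. }
        specialize (Hcj j). nra.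
      - exact (ex_series_scal_l _ _ Hc). }
    rewrite Series_scal_l in H. fold T in H. rewrite SR' in H.
    assert (HM : 0 < M).
    { unfold M. apply Rmult_lt_0_compat; auto.
      assert (0 < 4 / kappa ^ 2) by (apply Rdiv_lt_0_compat; [lra|apply pow2_gt_0; lra]).
      assert (0 < 2 / w0 ^ 2) by (apply Rdiv_lt_0_compat; [lra|apply pow2_gt_0; lra]). lra. }
    fold w0 in M. replace ((4 / kappa ^ 2 + 2 / w0 ^ 2) * T) with M in H by (unfold M; ring).
    apply mul_div_le in H; [|nra].
    apply my_div_le; [nra|]. nra.
  - intros k Hnear Hck.
    assert (Hfar : forall j, j <> k -> kappa / 2 <= Rabs (b - om j)).
    { intros j Hjk. specialize (Hsep j k Hjk).
      replace (om j - om k) with ((b - om k) - (b - om j)) in Hsep by ring.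
      pose proof (Rabs_triang (b - om k) (- (b - om j))). rewrite Rabs_Ropp in H.
      unfold Rminus at 1 in Hsep. lra. }
    set (ck := c k ^ 2).
    assert (Hck2 : 0 < ck) by (apply pow2_gt_0; auto).
    set (d := b - om k).
    set (Pk := PP a b (om k)).
    assert (HPk : 0 < Pk) by (apply PP_pos; auto).
    assert (HPkA : Pk = A ^ 2 + Rabs d ^ 2) by (unfold Pk, PP, A, d; rewrite pow2_abs; ring).
    set (rr' := fun j => if Nat.eqb j k then 0 else rr om c a b j).
    assert (Hrr'b : forall j, 0 <= rr' j <= (4 / kappa ^ 2 + / w0 ^ 2) * c j ^ 2).
    { intros j. unfold rr'. destruct (Nat.eqb_spec j k).
      - split; [lra|]. assert (0 < 4 / kappa ^ 2) by (apply Rdiv_lt_0_compat; [lra|apply pow2_gt_0; lra]).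
        assert (0 < / w0 ^ 2) by (apply Rinv_0_lt_compat; apply pow2_gt_0; lra). specialize (Hcj j). nra.
      - split; auto. unfold rr. specialize (HP j (Hfar j n)). specialize (HQ j). specialize (Hcj j). nra. }
    assert (Hrr'e : ex_series rr').
    { apply (ex_series_bound _ (fun j => (4 / kappa ^ 2 + / w0 ^ 2) * c j ^ 2)).
      - intros j. rewrite Rabs_pos_eq; apply Hrr'b.
      - exact (ex_series_scal_l _ _ Hc). }
    assert (Hrr'S : Series rr' <= (4 / kappa ^ 2 + / w0 ^ 2) * T).
    { unfold T. rewrite <- Series_scal_l. apply Series_le; auto. exact (ex_series_scal_l _ _ Hc). }
    assert (Hrr'0 : 0 <= Series rr') by (apply Series_nonneg'; auto; intros; apply Hrr'b).
    assert (Hdrop := Series_drop _ k Hr). fold rr' in Hdrop. rewrite SR' in Hdrop.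
    assert (Hrk1 : ck / Pk <= rr om c a b k).
    { unfold rr. fold Pk. fold ck. assert (0 < / QQ a b (om k)) by (apply Rinv_0_lt_compat; apply QQ_pos; auto).
      unfold Rdiv. nra. }
    assert (Hrk2 : rr om c a b k <= ck / Pk + T / w0 ^ 2).
    { unfold rr. fold Pk. fold ck. specialize (HQ k). specialize (HTk k). fold ck in HTk.
      assert (ck * / QQ a b (om k) <= T * / w0 ^ 2).
      { apply Rmult_le_compat; auto. lra. left; apply Rinv_0_lt_compat; apply QQ_pos; auto. }
      unfold Rdiv. nra. }
    assert (h1 : ck / Pk <= 2 / (gamma * A)) by lra.
    assert (h2 : 2 / (gamma * A) <= M + ck / Pk).
    { unfold M. fold w0. assert (T * (4 / kappa ^ 2 + 2 / w0 ^ 2) = (4 / kappa ^ 2 + / w0 ^ 2) * T + T / w0 ^ 2) by (unfold Rdiv; ring).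
      lra. }
    set (ii' := fun j => if Nat.eqb j k then 0 else ii om c a b j).
    assert (Hii'b : forall j, Rabs (ii' j) <= (2 / kappa + / w0) * c j ^ 2).
    { intros j. unfold ii'. destruct (Nat.eqb_spec j k).
      - rewrite Rabs_R0. assert (0 < 2 / kappa) by (apply Rdiv_lt_0_compat; lra).
        assert (0 < / w0) by (apply Rinv_0_lt_compat; lra). specialize (Hcj j). nra.
      - unfold ii. rewrite Rabs_mult, (Rabs_pos_eq (c j ^ 2)) by auto.
        assert (Rabs ((b - om j) / PP a b (om j) + (b + om j) / QQ a b (om j)) <= 2 / kappa + / w0).
        { eapply Rle_trans; [apply Rabs_triang|].
          rewrite (Rabs_pos_eq ((b + om j) / QQ a b (om j))) by auto.
          unfold Rdiv at 1. rewrite Rabs_mult, (Rabs_pos_eq (/ PP a b (om j))).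
          2: left; apply Rinv_0_lt_compat; apply PP_pos; auto.
          specialize (HP2 j (Hfar j n)). specialize (HQ2 j). unfold Rdiv in HP2. lra. }
        specialize (Hcj j). rewrite Rmult_comm. apply Rmult_le_compat_r; auto. }
    assert (Hii'e : ex_series ii').
    { apply (ex_series_bound _ (fun j => (2 / kappa + / w0) * c j ^ 2)); auto. exact (ex_series_scal_l _ _ Hc). }
    assert (Hii'a : ex_series (fun j => Rabs (ii' j))).
    { apply (ex_series_bound _ (fun j => (2 / kappa + / w0) * c j ^ 2)). intros j. rewrite Rabs_Rabsolu; auto. exact (ex_series_scal_l _ _ Hc). }
    assert (Hii'S : Rabs (Series ii') <= (2 / kappa + / w0) * T).
    { eapply Rle_trans; [apply Series_Rabs; auto|]. unfold T. rewrite <- Series_scal_l. apply Series_le.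
      intros j; split; [apply Rabs_pos|auto]. exact (ex_series_scal_l _ _ Hc). }
    assert (Hdrop2 := Series_drop _ k Hi). fold ii' in Hdrop2. rewrite SI in Hdrop2.
    assert (h3 : ck * Rabs d / Pk <= C2).
    { assert (Eik : ii om c a b k = ck * d / Pk + ck * ((b + om k) / QQ a b (om k))).
      { unfold ii. fold ck d Pk. unfold Rdiv. ring. }
      assert (Rabs (ii om c a b k) <= (2 / kappa + / w0) * T).
      { replace (ii om c a b k) with (- Series ii') by lra. rewrite Rabs_Ropp; auto. }
      assert (ck * ((b + om k) / QQ a b (om k)) <= T * / w0).
      { apply Rmult_le_compat; [lra|apply HQ3|apply HTk|apply HQ2]. }
      assert (ck * Rabs d / Pk = Rabs (ck * d / Pk)).
      { unfold Rdiv. rewrite !Rabs_mult, Rabs_pos_eq with (x := ck), Rabs_pos_eq with (x := / Pk); auto; try lra.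
        left; apply Rinv_0_lt_compat; auto. }
      rewrite H1. replace (ck * d / Pk) with (ii om c a b k - ck * ((b + om k) / QQ a b (om k))) by lra.
      eapply Rle_trans; [apply Rabs_triang|]. rewrite Rabs_Ropp.
      rewrite (Rabs_pos_eq (ck * _)) by (apply Rmult_le_pos; [lra|apply HQ3]).
      unfold C2. fold w0. unfold Rdiv in *. lra. }
    assert (HM : 0 < M).
    { unfold M. apply Rmult_lt_0_compat; auto.
      assert (0 < 4 / kappa ^ 2) by (apply Rdiv_lt_0_compat; [lra|apply pow2_gt_0; lra]).
      assert (0 < 2 / w0 ^ 2) by (apply Rdiv_lt_0_compat; [lra|apply pow2_gt_0; lra]). lra. }
    assert (HC2 : 0 < C2).
    { unfold C2. apply Rmult_lt_0_compat; auto.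
      assert (0 < 2 / kappa) by (apply Rdiv_lt_0_compat; lra).
      assert (0 < 2 / w0) by (apply Rdiv_lt_0_compat; lra). lra. }
    apply (final_alg A (Rabs d) ck gamma M C2 T); auto.
    + apply Rabs_pos.
    + apply HTk.
    + rewrite <- HPkA.
      assert (ck * gamma * A = (ck / Pk) * (gamma * A) * Pk) by (field; lra).
      rewrite H. replace (2 * Pk) with (2 / (gamma * A) * (gamma * A) * Pk) by (field; split; intro; nra).
      apply Rmult_le_compat_r; [lra|]. apply Rmult_le_compat_r; [nra|]. exact h1.
    + rewrite <- HPkA.
      assert (2 = 2 / (gamma * A) * (gamma * A)) by (field; split; intro; nra).
      assert (ck = ck / Pk * Pk) by (field; lra).
      assert (2 / (gamma * A) * (gamma * A) * Pk <= (M + ck / Pk) * (gamma * A) * Pk).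
      { apply Rmult_le_compat_r; [lra|]. apply Rmult_le_compat_r; [nra|]. auto. }
      replace (2 * Pk) with (2 / (gamma * A) * (gamma * A) * Pk) by (field; split; intro; nra).
      eapply Rle_trans; [apply H1|]. right. field. lra.
    + rewrite <- HPkA. apply mul_div_le in h3; auto.
Qed.

Lemma om_mono (om : nat -> R) : (forall j, om j < om (S j)) -> forall m n, (m <= n)%nat -> om m <= om n.
Proof. intros H m n Hmn. induction Hmn; [lra|]. specialize (H m0). lra. Qed.

Lemma om_sep (om : nat -> R) kappa : (forall j, om j < om (S j)) -> (forall j, om (S j) - om j >= kappa) ->
  forall j k, j <> k -> kappa <= Rabs (om j - om k).
Proof.
  intros Hm Hk j k Hjk.
  destruct (Nat.lt_gt_cases j k) as [[Hlt|Hlt] _]; [lia| |].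
  - pose proof (om_mono om Hm (S j) k Hlt). specialize (Hk j). pose proof (Hm j).
    rewrite Rabs_left1 by lra. lra.
  - pose proof (om_mono om Hm (S k) j Hlt). specialize (Hk k). pose proof (Hm k).
    rewrite Rabs_pos_eq by lra. lra.
Qed.

Lemma finite_min (g : nat -> R) N : (forall k, 0 < g k) -> exists m, 0 < m /\ forall k, (k < N)%nat -> m <= g k.
Proof.
  intros Hg. induction N.
  - exists 1. split; [lra|]. intros; lia.
  - destruct IHN as [m [Hm H]]. exists (Rmin m (g N)). split.
    + apply Rmin_pos; auto.
    + intros k Hk. destruct (Nat.eq_dec k N).
      * subst. apply Rmin_r.
      * eapply Rle_trans; [apply Rmin_l|]. apply H; lia.
Qed.

Lemma lower_m2 (om c : nat -> R) alpha beta k0 :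
  (forall j, 0 < om j) -> (forall j, c j <> 0) -> 0 < beta ->
  (forall k, (k0 <= k)%nat -> Rabs (c k) * Rpower (om k) (alpha / 2) >= beta) ->
  exists m2, 0 < m2 /\ forall k, m2 <= c k ^ 2 * Rpower (om k) alpha.
Proof.
  intros Hom Hc Hb HA.
  assert (Hp : forall k, 0 < c k ^ 2 * Rpower (om k) alpha).
  { intros k. apply Rmult_lt_0_compat. apply pow2_gt_0; auto. apply exp_pos. }
  destruct (finite_min _ k0 Hp) as [m [Hm H]].
  exists (Rmin m (beta ^ 2)). split. apply Rmin_pos; auto. apply pow2_gt_0; lra.
  intros k. destruct (Nat.lt_ge_cases k k0).
  - eapply Rle_trans; [apply Rmin_l|]. auto.
  - eapply Rle_trans; [apply Rmin_r|]. specialize (HA k H0).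
    assert (E : c k ^ 2 * Rpower (om k) alpha = (Rabs (c k) * Rpower (om k) (alpha / 2)) ^ 2).
    { rewrite Rpow_mult_distr, pow2_abs. f_equal. simpl. rewrite Rmult_1_r, <- Rpower_plus. f_equal. field. }
    rewrite E. apply pow_incr. lra.
Qed.

Lemma zero_bound om c gamma kappa alpha m2 a b :
  (forall j, 0 < om j) -> (forall j, om 0%nat <= om j) ->
  (forall j k, j <> k -> kappa <= Rabs (om j - om k)) ->
  ex_series (fun j => c j ^ 2) -> (forall j, c j <> 0) -> 0 < gamma -> 0 < kappa ->
  0 < alpha -> 0 < m2 -> (forall k, m2 <= c k ^ 2 * Rpower (om k) alpha) ->
  a <> 0 -> 0 < b -> f_fun om c gamma (a, b) = 0%C ->
  let T := Series (fun j => c j ^ 2) in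
  let M := T * (4 / kappa ^ 2 + 2 / om 0%nat ^ 2) in
  let C2 := T * (2 / kappa + 2 / om 0%nat) in
  let m1 := Rmin (gamma / 4) (2 / (gamma * (M * T + 4 * C2 ^ 2))) in
  let Cst := 1 + gamma * M / 2 + Rpower 2 alpha / (m1 * m2) in
  forall s, 1 + kappa / 2 <= Rabs s -> 1 <= Cst * Rpower (Rabs s) alpha * sqrt (a ^ 2 + (b - s) ^ 2).
Proof.
  intros Hom Hom0 Hsep Hc Hc0 Hg Hk Hal Hm2 Hm2k Ha Hb Hf T M C2 m1 Cst s Hs.
  destruct (core_est om c gamma kappa a b Hom Hom0 Hsep Hc (Hc0 0%nat) Hg Hk Ha Hb Hf) as [Hfar Hnear].
  fold T M C2 in Hfar, Hnear. fold m1 in Hnear.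
  assert (Hw0 : 0 < om 0%nat) by apply Hom.
  assert (HT : 0 < T).
  { unfold T. rewrite (Series_drop _ 0%nat Hc).
    assert (0 <= Series (fun j => if Nat.eqb j 0 then 0 else c j ^ 2)).
    { apply Series_nonneg'.
      - apply (ex_series_bound _ (fun j => c j ^ 2)); auto.
        intros j. destruct (Nat.eqb j 0); rewrite ?Rabs_R0, ?Rabs_pos_eq; try apply pow2_ge_0; lra.
      - intros j. destruct (Nat.eqb j 0); try lra; apply pow2_ge_0. }
    assert (0 < c 0%nat ^ 2) by (apply pow2_gt_0; auto). lra. }
  assert (HM : 0 < M).
  { unfold M. apply Rmult_lt_0_compat; auto.
    assert (0 < 4 / kappa ^ 2) by (apply Rdiv_lt_0_compat; [lra|apply pow2_gt_0; lra]).
    assert (0 < 2 / om 0%nat ^ 2) by (apply Rdiv_lt_0_compat; [lra|apply pow2_gt_0; lra]). lra. }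
  assert (HC2 : 0 < C2).
  { unfold C2. apply Rmult_lt_0_compat; auto.
    assert (0 < 2 / kappa) by (apply Rdiv_lt_0_compat; lra).
    assert (0 < 2 / om 0%nat) by (apply Rdiv_lt_0_compat; lra). lra. }
  assert (Hm1 : 0 < m1).
  { unfold m1. apply Rmin_pos. lra. apply Rdiv_lt_0_compat; [lra|].
    apply Rmult_lt_0_compat; auto. assert (0 < C2 ^ 2) by (apply pow2_gt_0; lra). nra. }
  assert (Hp2 : 0 < Rpower 2 alpha) by apply exp_pos.
  assert (Hq : 0 < Rpower 2 alpha / (m1 * m2)) by (apply Rdiv_lt_0_compat; nra).
  assert (HCst1 : 1 <= Cst) by (unfold Cst; nra).
  assert (Habs1 : 1 <= Rabs s) by lra.
  set (Rs := Rpower (Rabs s) alpha).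
  assert (HRs : 1 <= Rs).
  { unfold Rs. rewrite <- (Rpower_O (Rabs s)) by lra. apply Rle_Rpower; lra. }
  set (E := sqrt (a ^ 2 + (b - s) ^ 2)).
  assert (HEa : Rabs a <= E).
  { unfold E. rewrite <- (sqrt_pow2 (Rabs a)) by apply Rabs_pos. apply sqrt_le_1_alt.
    rewrite pow2_abs. assert (0 <= (b - s)^2) by apply pow2_ge_0. lra. }
  assert (HEb : Rabs (b - s) <= E).
  { unfold E. rewrite <- (sqrt_pow2 (Rabs (b - s))) by apply Rabs_pos. apply sqrt_le_1_alt.
    rewrite pow2_abs. assert (0 <= a^2) by apply pow2_ge_0. lra. }
  assert (HE0 : 0 <= E) by (unfold E; apply sqrt_pos).
  destruct (Rle_or_lt 1 (Rabs (b - s))) as [Hbs|Hbs].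
  - assert (1 <= E) by lra.
    assert (1 <= Cst * Rs) by nra. nra.
  - assert (Hspos : 0 < s).
    { destruct (Rle_or_lt s 0); auto. rewrite Rabs_left1 in Hs by lra.
      rewrite Rabs_pos_eq in Hbs by lra. lra. }
    assert (HsE : Rabs s = s) by (apply Rabs_pos_eq; lra). rewrite HsE in Hs.
    destruct (classic (exists k, Rabs (b - om k) < kappa / 2)) as [[k Hkn]|Hno].
    + specialize (Hnear k Hkn (Hc0 k)).
      assert (Hwk : om k <= 2 * Rabs s).
      { rewrite HsE. apply Rabs_def2 in Hkn. apply Rabs_def2 in Hbs. lra. }
      assert (Rpower (om k) alpha <= Rpower 2 alpha * Rs).
      { unfold Rs. rewrite Rpower_mult_distr by lra. apply Rle_Rpower_l; [lra|]. split; auto. }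
      specialize (Hm2k k).
      assert (0 <= c k ^ 2) by apply pow2_ge_0.
      assert (m2 <= c k ^ 2 * (Rpower 2 alpha * Rs)).
      { eapply Rle_trans; [apply Hm2k|]. apply Rmult_le_compat_l; auto. }
      assert (m1 * m2 <= Rabs a * (Rpower 2 alpha * Rs)).
      { assert (m1 * m2 <= m1 * (c k ^ 2 * (Rpower 2 alpha * Rs))) by (apply Rmult_le_compat_l; lra).
        assert (m1 * c k ^ 2 * (Rpower 2 alpha * Rs) <= Rabs a * (Rpower 2 alpha * Rs)) by (apply Rmult_le_compat_r; nra).
        nra. }
      assert (1 <= Rpower 2 alpha / (m1 * m2) * Rs * Rabs a).
      { replace (Rpower 2 alpha / (m1 * m2) * Rs * Rabs a) with ((Rabs a * (Rpower 2 alpha * Rs)) / (m1 * m2)) by (field; split; apply Rgt_not_eq; lra).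
        apply (Rmult_le_reg_r (m1 * m2)); [nra|]. unfold Rdiv. rewrite Rmult_assoc, Rinv_l by (apply Rgt_not_eq; nra). lra. }
      assert (Rpower 2 alpha / (m1 * m2) <= Cst) by (unfold Cst; nra).
      assert (0 <= Rabs a) by apply Rabs_pos.
      assert (Rpower 2 alpha / (m1 * m2) * Rs * Rabs a <= Cst * Rs * E).
      { apply Rmult_le_compat; try nra. }
      lra.
    + assert (Hall : forall j, kappa / 2 <= Rabs (b - om j)).
      { intros j. destruct (Rle_or_lt (kappa / 2) (Rabs (b - om j))); auto. exfalso; apply Hno; eauto. }
      specialize (Hfar Hall).
      assert (1 <= gamma * M / 2 * Rabs a).
      { apply mul_div_le in Hfar. 2: nra. 
        replace (gamma * M / 2 * Rabs a) with (Rabs a * (gamma * M) / 2) by (field). lra. }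
      assert (gamma * M / 2 <= Cst) by (unfold Cst; nra).
      assert (0 <= Rabs a) by apply Rabs_pos.
      assert (gamma * M / 2 * Rabs a <= Cst * Rs * E).
      { apply Rmult_le_compat; try nra. }
      lra.
Qed.

Lemma zero_bound' om c gamma kappa alpha m2 :
  (forall j, 0 < om j) -> (forall j, om 0%nat <= om j) ->
  (forall j k, j <> k -> kappa <= Rabs (om j - om k)) ->
  ex_series (fun j => c j ^ 2) -> (forall j, c j <> 0) -> 0 < gamma -> 0 < kappa ->
  0 < alpha -> 0 < m2 -> (forall k, m2 <= c k ^ 2 * Rpower (om k) alpha) ->
  exists Cst, forall a b, a <> 0 -> 0 < b -> f_fun om c gamma (a, b) = 0%C ->
  forall s, 1 + kappa / 2 <= Rabs s -> 1 <= Cst * Rpower (Rabs s) alpha * sqrt (a ^ 2 + (b - s) ^ 2).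
Proof.
  intros.
  pose (T := Series (fun j => c j ^ 2)).
  pose (M := T * (4 / kappa ^ 2 + 2 / om 0%nat ^ 2)).
  pose (C2 := T * (2 / kappa + 2 / om 0%nat)).
  pose (m1 := Rmin (gamma / 4) (2 / (gamma * (M * T + 4 * C2 ^ 2)))).
  exists (1 + gamma * M / 2 + Rpower 2 alpha / (m1 * m2)).
  intros a b Ha Hb Hf.
  exact (zero_bound om c gamma kappa alpha m2 a b H H0 H1 H2 H3 H4 H5 H6 H7 H8 Ha Hb Hf).
Qed.

Lemma Cmod_sub_sq (x y : C) : Cmod (x - y)%C ^ 2 <= 2 * Cmod x ^ 2 + 2 * Cmod y ^ 2.
Proof.
  unfold Cminus. pose proof (Cmod_triangle x (- y)). rewrite Cmod_opp in H.
  pose proof (Cmod_ge_0 (x + - y)). pose proof (Cmod_ge_0 x). pose proof (Cmod_ge_0 y).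
  assert (Cmod (x + - y) ^ 2 <= (Cmod x + Cmod y) ^ 2) by (apply pow_incr; lra).
  assert (0 <= (Cmod x - Cmod y)^2) by apply pow2_ge_0. nra.
Qed.

Lemma l2_sub (u v : nat -> C) : l2 u -> l2 v -> l2 (fun n => (u n - v n)%C).
Proof.
  intros Hu Hv. unfold l2 in *.
  apply (ex_series_bound _ (fun n => 2 * Cmod (u n) ^ 2 + 2 * Cmod (v n) ^ 2)).
  - intros n. rewrite Rabs_pos_eq by (apply pow2_ge_0). apply Cmod_sub_sq.
  - apply ex_series_lin; auto.
Qed.

Lemma l2_scal_bound (u v : nat -> C) k : l2 u -> (forall n, Cmod (v n) <= k * Cmod (u n)) -> l2 v.
Proof.
  intros Hu Hb. unfold l2 in *.
  apply (ex_series_bound _ (fun n => k ^ 2 * Cmod (u n) ^ 2)).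
  - intros n. rewrite Rabs_pos_eq by (apply pow2_ge_0). rewrite <- Rpow_mult_distr.
    apply pow_incr. split; [apply Cmod_ge_0|auto].
  - exact (ex_series_scal_l _ _ Hu).
Qed.

Lemma resolvent_from_bound lam z K : 0 < K ->
  (forall n, 1 <= K * Cmod (Cconj (lam n) - z) /\ 1 <= K * Cmod (lam n - z)) ->
  resolvent_norm_le lam z K.
Proof.
  intros HK Hb.
  assert (Hd1 : forall n, (Cconj (lam n) - z)%C <> 0%C).
  { intros n E. destruct (Hb n) as [H _]. rewrite E, Cmod_0 in H. lra. }
  assert (Hd2 : forall n, (lam n - z)%C <> 0%C).
  { intros n E. destruct (Hb n) as [_ H]. rewrite E, Cmod_0 in H. lra. }
  assert (Hkey : forall d w : C, 1 <= K * Cmod d -> Cmod w <= K * Cmod (d * w)%C).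
  { intros d w Hd. rewrite Cmod_mult. pose proof (Cmod_ge_0 w). nra. }
  split.
  - intros x [H1 H2].
    exists (fun n => (fst x n / (Cconj (lam n) - z))%C, fun n => (snd x n / (lam n - z))%C).
    split; [split; [split|split]|].
    + simpl. apply (l2_scal_bound (fst x) _ K H1). intros n.
      rewrite <- (Cmult_1_l (fst x n)) at 2.
      replace (fst x n) with ((Cconj (lam n) - z) * (fst x n / (Cconj (lam n) - z)))%C at 2 by (field; auto).
      rewrite Cmult_1_l. apply Hkey. apply Hb.
    + simpl. apply (l2_scal_bound (snd x) _ K H2). intros n.
      replace (snd x n) with ((lam n - z) * (snd x n / (lam n - z)))%C at 2 by (field; auto).
      apply Hkey. apply Hb.
    + simpl. apply (l2_scal_bound (fst x) _ (1 + Cmod z * K) H1). intros n.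
      replace (Cconj (lam n) * (fst x n / (Cconj (lam n) - z)))%C
        with (fst x n + z * (fst x n / (Cconj (lam n) - z)))%C by (field; auto).
      eapply Rle_trans; [apply Cmod_triangle|]. rewrite Cmod_mult.
      assert (Cmod (fst x n / (Cconj (lam n) - z)) <= K * Cmod (fst x n)).
      { rewrite <- (Cmult_1_l (fst x n)) at 2.
        replace (fst x n) with ((Cconj (lam n) - z) * (fst x n / (Cconj (lam n) - z)))%C at 2 by (field; auto).
        rewrite Cmult_1_l. apply Hkey. apply Hb. }
      pose proof (Cmod_ge_0 z). nra.
    + simpl. apply (l2_scal_bound (snd x) _ (1 + Cmod z * K) H2). intros n.
      replace (lam n * (snd x n / (lam n - z)))%C
        with (snd x n + z * (snd x n / (lam n - z)))%C by (field; auto).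
      eapply Rle_trans; [apply Cmod_triangle|]. rewrite Cmod_mult.
      assert (Cmod (snd x n / (lam n - z)) <= K * Cmod (snd x n)).
      { replace (snd x n) with ((lam n - z) * (snd x n / (lam n - z)))%C at 2 by (field; auto).
        apply Hkey. apply Hb. }
      pose proof (Cmod_ge_0 z). nra.
    + destruct x as [x1 x2]. unfold hsub, Gop, hscal. simpl. f_equal; apply functional_extensionality; intros n.
      * field. auto.
      * field. auto.
  - intros y [[Hy1 Hy2] [Hl1 Hl2]].
    unfold hnorm, hsub, Gop, hscal. cbn [fst snd].
    set (u1 := fun n => (Cconj (lam n) * fst y n - z * fst y n)%C).
    set (u2 := fun n => (lam n * snd y n - z * snd y n)%C).
    assert (Hu1 : l2 u1).
    { apply l2_sub; auto. apply (l2_scal_bound (fst y) _ (Cmod z) Hy1). intros n. rewrite Cmod_mult. lra. }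
    assert (Hu2 : l2 u2).
    { apply l2_sub; auto. apply (l2_scal_bound (snd y) _ (Cmod z) Hy2). intros n. rewrite Cmod_mult. lra. }
    assert (B1 : Series (fun n => Cmod (fst y n) ^ 2) <= K ^ 2 * Series (fun n => Cmod (u1 n) ^ 2)).
    { rewrite <- Series_scal_l. apply Series_le.
      - intros n. split; [apply pow2_ge_0|]. rewrite <- Rpow_mult_distr. apply pow_incr.
        split; [apply Cmod_ge_0|]. unfold u1.
        replace (Cconj (lam n) * fst y n - z * fst y n)%C with ((Cconj (lam n) - z) * fst y n)%C by ring.
        apply Hkey, Hb.
      - exact (ex_series_scal_l _ _ Hu1). }
    assert (B2 : Series (fun n => Cmod (snd y n) ^ 2) <= K ^ 2 * Series (fun n => Cmod (u2 n) ^ 2)).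
    { rewrite <- Series_scal_l. apply Series_le.
      - intros n. split; [apply pow2_ge_0|]. rewrite <- Rpow_mult_distr. apply pow_incr.
        split; [apply Cmod_ge_0|]. unfold u2.
        replace (lam n * snd y n - z * snd y n)%C with ((lam n - z) * snd y n)%C by ring.
        apply Hkey, Hb.
      - exact (ex_series_scal_l _ _ Hu2). }
    assert (N1 : 0 <= Series (fun n => Cmod (u1 n) ^ 2)) by (apply Series_nonneg'; auto; intros; apply pow2_ge_0).
    assert (N2 : 0 <= Series (fun n => Cmod (u2 n) ^ 2)) by (apply Series_nonneg'; auto; intros; apply pow2_ge_0).
    rewrite <- (sqrt_pow2 K) at 1 by lra.
    assert (F : sqrt (Series (fun n => Cmod (fst y n) ^ 2) + Series (fun n => Cmod (snd y n) ^ 2)) <=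
      sqrt (K ^ 2) * sqrt (Series (fun n => Cmod (u1 n) ^ 2) + Series (fun n => Cmod (u2 n) ^ 2))).
    { rewrite <- sqrt_mult by (try apply pow2_ge_0; lra). apply sqrt_le_1_alt. lra. }
    exact F.
Qed.

Lemma Cmod_shift a b s : Cmod ((a, b) - Ci * RtoC s)%C = sqrt (a ^ 2 + (b - s) ^ 2).
Proof. unfold Cmod. f_equal. unfold Cminus, Cplus, Copp, Cmult, Ci, RtoC. cbn [fst snd]. ring. Qed.

Theorem lemma4p1 (om c : nat -> R) (gamma : R) (lam : nat -> C)
  (kappa alpha beta : R) (k0 : nat) :
  0 < om 0%nat ->
  (forall j, om j < om (S j)) ->
  ex_series (fun j => c j ^ 2) ->
  (forall j, c j <> 0) ->
  0 < gamma ->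
  standing_S om c gamma lam ->
  (* (A2) *)
  0 < kappa -> (forall j, om (S j) - om j >= kappa) ->
  (* (A3) *)
  0 < alpha -> 0 < beta ->
  (forall k, (k0 <= k)%nat -> Rabs (c k) * Rpower (om k) (alpha / 2) >= beta) ->
  exists Cst S0 : R, forall s : R, S0 <= Rabs s ->
    resolvent_norm_le lam (Ci * RtoC s)%C (Cst * Rpower (Rabs s) alpha).
Proof.
  intros Hom00 Hinc Hc Hc0 Hg HS Hk HA2 Hal Hbe HA3.
  destruct HS as [_ [_ [Hnc [Hzero [_ [Hre _]]]]]].
  assert (Hom0 : forall j, om 0%nat <= om j) by (intros; apply om_mono; auto; lia).
  assert (Hom : forall j, 0 < om j) by (intros j; specialize (Hom0 j); lra).
  pose proof (om_sep om kappa Hinc HA2) as Hsep.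
  destruct (lower_m2 om c alpha beta k0 Hom Hc0 Hbe HA3) as [m2 [Hm2 Hm2k]].
  destruct (zero_bound' om c gamma kappa alpha m2 Hom Hom0 Hsep Hc Hc0 Hg Hk Hal Hm2 Hm2k) as [Cst HZ].
  exists Cst, (1 + kappa / 2). intros s Hs.
  assert (Hs' : 1 + kappa / 2 <= Rabs (- s)) by (rewrite Rabs_Ropp; auto).
  assert (Hmain : forall n, 1 <= Cst * Rpower (Rabs s) alpha * Cmod (Cconj (lam n) - Ci * RtoC s) /\
                            1 <= Cst * Rpower (Rabs s) alpha * Cmod (lam n - Ci * RtoC s)).
  { intros n. pose proof (Hre n) as Hr. pose proof (Hnc n n) as Hn. destruct (Hzero n) as [Z1 Z2].
    destruct (lam n) as [a b].
    assert (Ha : a <> 0) by exact Hr.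
    assert (Hb : b <> 0).
    { intro E. apply Hn. subst b. unfold Cconj. cbn [fst snd]. f_equal. ring. }
    unfold Cconj in *. cbn [fst snd] in *.
    rewrite !Cmod_shift.
    destruct (Rlt_or_le 0 b) as [Hbp|Hbn].
    - split.
      + replace ((- b - s) ^ 2) with ((b - - s) ^ 2) by ring.
        rewrite <- (Rabs_Ropp s). apply HZ; auto.
      + apply HZ; auto.
    - assert (Hbp : 0 < - b) by lra. split.
      + apply HZ; auto.
      + replace ((b - s) ^ 2) with ((- b - - s) ^ 2) by ring.
        rewrite <- (Rabs_Ropp s). apply HZ; auto. }
  apply resolvent_from_bound.
  - destruct (Hmain 0%nat) as [H _]. pose proof (Cmod_ge_0 (Cconj (lam 0%nat) - Ci * RtoC s)).
    destruct (Rlt_or_le 0 (Cst * Rpower (Rabs s) alpha)); auto. nra.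
  - exact Hmain.
Qed.
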